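(* Let $\overline G$ be a finite graph embedded in an annulus $A$ with annular connectivity $\kappa(\overline G)=1$, and let $G$ be its lift to the universal cover of $A$. Let $v$ be a vertex forming an annular cut set, and let $H$ be the finite graph obtained by splitting $\overline G$ at $v$ into two vertices $v',v''$, so that $G$ is the infinite join $\cdots * H_\nu * H_{\nu+1}*\cdots$ of copies $(H_\nu,v'_\nu,v''_\nu)$ of $(H,v',v'')$, with $H_\nu$ joined to $H_{\nu+1}$ by identifying $v'_\nu$ with $v''_{\nu+1}$. Then, over $\mathbb F=\mathbb Q$, the Laplacian polynomial satisfies $\Delta_0(x)=\tau(H)(x-1)^2$ (up to units of $\mathbb Q[x^{\pm1}]$), where $\tau(H)$ is the number of spanning trees of $H$.
   Context: $\mathbb Z=\langle x\rangle$ acts on $G$ by deck transformations with quotient $\overline G$ with vertices $v_1,\dots,v_n$; choose lifts $v_{i,0}$ and set $v_{i,\nu}=x^\nu v_{i,0}$. The Laplacian matrix is $L(x)=D-A(x)$ over $\mathbb Q[x^{\pm1}]$, $D$ the diagonal matrix of degrees (loops counted twice), $A(x)_{ij}$ the sum of $x^\nu$ over edges of $G$ from $v_{i,0}$ to $v_{j,\nu}$; $\Delta_0=\det L(x)$, defined up to units. An annular cut set of $\overline G$ is a set of vertices whose removal (with incident edges) leaves a graph contained in a disk in $A$; $\kappa(\overline G)$ is the minimal cardinality of such a set. *)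

(* Defs.v *)
From HB Require Import structures.
From mathcomp Require Import all_boot all_order all_algebra.
Set Implicit Arguments. Unset Strict Implicit. Unset Printing Implicit Defensive.
Import Order.TTheory GRing.Theory Num.Theory.
Local Open Scope ring_scope.

(* The finite graph H: a finite multigraph (loops and parallel edges allowed) *)
(* Two distinguished distinct vertices v1 = v' and v2 = v''.                  *)

Definition dart (V E : Type) (ends : E -> V * V) (e : E) (b : bool) : V * V :=
  if b then ends e else ((ends e).2, (ends e).1).

Definition adjT (V E : finType) (ends : E -> V * V) (T : {set E}) : rel V :=
  fun u w => [exists e in T, (ends e == (u, w)) || (ends e == (w, u))].

(* T is (the edge set of) a spanning tree of H: the subgraph (V, T) is
   connected, and minimally so (every edge of T is a bridge; in particular
   T contains no loops and no cycles). *)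
Definition spanning_tree (V E : finType) (ends : E -> V * V) (T : {set E}) :=
  [forall u : V, forall w : V, connect (adjT ends T) u w] &&
  [forall e in T, ~~ connect (adjT ends (T :\ e)) (ends e).1 (ends e).2].

Definition tau (V E : finType) (ends : E -> V * V) : nat :=
  #|[set T : {set E} | spanning_tree ends T]|.

(* Vertices of G are pairs (u, nu) with u : V, u != v2, nu : int; the copy of *)
(* vertex u of H in H_nu is join_vtx v1 v2 nu u, where v''_nu is identified   *)
(* with v'_{nu-1} (equivalently v'_nu = v''_{nu+1}).  Edges of G are pairs    *)
(* (e, nu), e : E, joining the images of the endpoints of e in H_nu.  The     *)
(* deck transformation x acts by (u, nu) |-> (u, nu + 1), (e,nu) |-> (e,nu+1).*)
(* The quotient graph Gbar has vertices {u : V | u != v2} (v = image of v'),  *)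
(* and we choose the lifts v_{i,0} := (i, 0).                                 *)
Definition join_vtx (V : eqType) (v1 v2 : V) (nu : int) (u : V) : V * int :=
  if u == v2 then (v1, nu - 1) else (u, nu).

Definition qvert (V : finType) (v2 : V) := {u : V | u != v2}.

(* Laurent polynomials Q[x^{+-1}] are viewed inside the field Q(x). *)
Definition Fx := {fraction {poly rat}}.
Definition xF : Fx := tofrac ('X : {poly rat}).

(* A(x)_{ij} = sum of x^nu over the darts (oriented edges) of G from v_{i,0}
   to v_{j,nu}.  Every such dart is the translate by x^{-m} of a unique dart
   (e, 0, b) of the copy H_0 going from (i, m) to (j, m + nu); hence the sum
   below (a loop of G at v_{i,0} contributes twice, once per orientation). *)
Definition lapA (V E : finType) (ends : E -> V * V) (v1 v2 : V)
    (i j : qvert v2) : Fx :=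
  \sum_(e : E) \sum_(b : bool)
    let a := join_vtx v1 v2 0 (dart ends e b).1 in
    let c := join_vtx v1 v2 0 (dart ends e b).2 in
    if (a.1 == val i) && (c.1 == val j) then xF ^ (c.2 - a.2) else 0.

(* degree of v_{i,0} in G (loops counted twice): number of darts of G with
   tail v_{i,0}, i.e. (by translation) darts of H_0 with tail in the orbit of
   v_{i,0}. *)
Definition lapD (V E : finType) (ends : E -> V * V) (v1 v2 : V)
    (i : qvert v2) : nat :=
  \sum_(e : E) \sum_(b : bool)
    ((join_vtx v1 v2 0 (dart ends e b).1).1 == val i).

Definition lapL (V E : finType) (ends : E -> V * V) (v1 v2 : V) :
    'M[Fx]_#|{: qvert v2}| :=
  \matrix_(i, j)
    ((if i == j then (lapD ends v1 (enum_val i))%:R else 0)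
     - lapA ends v1 (enum_val i) (enum_val j)).

Definition Delta0 (V E : finType) (ends : E -> V * V) (v1 v2 : V) : Fx :=
  \det (lapL ends v1 v2).

(* Main.v *)
Require Import Defs.
From HB Require Import structures.
From mathcomp Require Import all_boot all_order all_algebra fingroup perm.
From mathcomp Require Import ring.
Set Implicit Arguments. Unset Strict Implicit. Unset Printing Implicit Defensive.
Import Order.TTheory GRing.Theory Num.Theory.

Section Comb.
Variables (V E : finType) (ends : E -> V * V) (r : V).

Definition dtl (d : E * bool) := (dart ends d.1 d.2).1.
Definition dhd (d : E * bool) := (dart ends d.1 d.2).2.

Lemma adjP (T : {set E}) a b :
  reflect (exists d : E * bool, [/\ d.1 \in T, dtl d = a & dhd d = b])
          (adjT ends T a b).
Proof.
apply: (iffP existsP) => [[e /andP[eT /orP[/eqP h|/eqP h]]]|[[e b0] [/= eT]]].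
- by exists (e, true); rewrite /dtl /dhd /dart /= h.
- by exists (e, false); rewrite /dtl /dhd /dart /= h.
rewrite /dtl /dhd /dart /=; case: b0 => <- <-; exists e; rewrite eT /=.
  by rewrite -surjective_pairing eqxx.
by rewrite -surjective_pairing eqxx orbT.
Qed.

Lemma adj_dart (T : {set E}) d : d.1 \in T -> adjT ends T (dtl d) (dhd d).
Proof. by move=> dT; apply/adjP; exists d. Qed.

Lemma adj_sym (T : {set E}) : symmetric (adjT ends T).
Proof.
move=> a b; apply/adjP/adjP => -[[e b0] [eT <- <-]];
  by exists (e, ~~ b0); split => //=; rewrite /dtl /dhd /dart /=; case: (b0).
Qed.

Lemma conn_sym (T : {set E}) : connect_sym (adjT ends T).
Proof. exact/sym_connect_sym/adj_sym. Qed.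

Lemma CS (T : {set E}) (S : pred V) :
  (forall d, d.1 \in T -> dtl d \in S -> dhd d \in S) ->
  forall x y, connect (adjT ends T) x y -> x \in S -> y \in S.
Proof.
move=> H x y /connectP[p pp ->]; elim: p x pp => //= z p IH x.
case/andP=> /adjP[d [dT <- <-]] pp Sx; exact: IH pp (H d dT Sx).
Qed.

Lemma dart_same c d : c.1 = d.1 ->
  (dtl c = dtl d /\ dhd c = dhd d) \/ (dtl c = dhd d /\ dhd c = dtl d).
Proof.
case: c d => [e b1] [e' b2] /= <-; rewrite /dtl /dhd /dart /=.
by case: b1; case: b2; [left|right|right|left].
Qed.

Lemma conn_step (T : {set E}) x d : d.1 \in T -> connect (adjT ends T) x (dtl d) ->
  connect (adjT ends T) x (dhd d).
Proof. by move=> dT c; apply: connect_trans c (connect1 (adj_dart dT)). Qed.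

Lemma dart_rev c d : c.1 = d.1 -> c != d -> dtl c = dhd d /\ dhd c = dtl d.
Proof.
case: c d => [e b1] [e' b2] /= <-; rewrite /dtl /dhd /dart /=.
by case: b1; case: b2; rewrite ?eqxx.
Qed.

Definition dgood (T : {set E}) v d :=
  [&& d.1 \in T, dtl d == v & ~~ connect (adjT ends (T :\ d.1)) v r].

Definition conn (T : {set E}) := forall u w, connect (adjT ends T) u w.

Lemma good_uniq (T : {set E}) v d d' : conn T -> dgood T v d -> dgood T v d' -> d = d'.
Proof.
move=> cT /and3P[dT /eqP tld nd] /and3P[dT' /eqP tld' nd'].
apply/eqP/negPn/negP => ndd.
pose X := [pred u | connect (adjT ends (T :\ d'.1)) v u].
pose Y := [pred u | connect (adjT ends (T :\ d.1)) v u].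
have nd'd : d' != d by rewrite eq_sym.
have hdY : dhd d' \in [predU X & Y].
  have [e1|e1] := eqVneq d'.1 d.1.
    have [h1 h2] := dart_rev e1 nd'd.
    by rewrite inE h2 tld; apply/orP; left; rewrite inE connect0.
  apply/orP; right; rewrite inE -tld'; apply: connect1; apply: adj_dart.
  by rewrite !inE e1 dT'.
have hdX : dhd d \in [predU X & Y].
  have [e1|e1] := eqVneq d.1 d'.1.
    have [h1 h2] := dart_rev e1 ndd.
    by rewrite inE h2 tld'; apply/orP; right; rewrite inE connect0.
  apply/orP; left; rewrite inE -tld; apply: connect1; apply: adj_dart.
  by rewrite !inE e1 dT.
have : r \in [predU X & Y].
  apply: (CS _ (cT v r)); last by rewrite !inE connect0.
  move=> c cT1; rewrite !inE => /orP[cX|cY].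
    have [e1|e1] := eqVneq c.1 d'.1.
      have [[h1 h2]|[h1 h2]] := dart_same e1; first by rewrite h2; move: hdY; rewrite !inE.
      by rewrite h2 tld' connect0.
    by rewrite (conn_step _ cX) // !inE e1.
  have [e1|e1] := eqVneq c.1 d.1.
    have [[h1 h2]|[h1 h2]] := dart_same e1; first by rewrite h2; move: hdX; rewrite !inE.
    by rewrite h2 tld connect0 ?orbT.
  by rewrite (conn_step _ cY) ?orbT // !inE e1.
by rewrite !inE (negPf nd) (negPf nd').
Qed.

End Comb.

Section F.
Variables (V : finType) (f : V -> V) (r : V).
Hypothesis fr : f r = r.

Lemma fcon_fix u : fconnect f r u -> u = r.
Proof. by move/iter_findex <-; rewrite iter_fix. Qed.

Lemma fcon_back u v : fconnect f (f u) v -> fconnect f u v.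
Proof. exact: connect_trans (fconnect1 f u). Qed.

Lemma fcon_fwd u v : fconnect f u v -> u != v -> fconnect f (f u) v.
Proof.
move=> /iter_findex; case: (findex f u v) => [<-|n]; first by rewrite eqxx.
by rewrite iterSr => <- _; apply: fconnect_iter.
Qed.

Lemma fcon_nocyc u : fconnect f u r -> u != r -> ~~ fconnect f (f u) u.
Proof.
move=> ur nur; apply/negP => fuu.
have H n : fconnect f (iter n f u) u.
  elim: n => [|n IH] /=; first exact: connect0.
  have [e|ne] := eqVneq (iter n f u) u; first by rewrite e.
  exact: fcon_fwd.
by move: (H (findex f u r)); rewrite iter_findex // => /fcon_fix ur'; rewrite ur' eqxx in nur.
Qed.
End F.

Section Tree.
Variables (V E : finType) (ends : E -> V * V) (r : V).
Local Notation tl := (dtl ends).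
Local Notation hd := (dhd ends).
Local Notation adj := (adjT ends).
Local Notation good := (dgood ends r).

Lemma st_conn T : spanning_tree ends T -> conn ends T.
Proof. by case/andP=> /forallP H _ u w; exact: (forallP (H u)). Qed.

Lemma st_bridge T e : spanning_tree ends T -> e \in T ->
  ~~ connect (adj (T :\ e)) (ends e).1 (ends e).2.
Proof. by case/andP=> _ /forall_inP H; apply: H. Qed.

Lemma ends_dart d : (ends d.1 = (tl d, hd d)) \/ (ends d.1 = (hd d, tl d)).
Proof.
rewrite /dtl /dhd /dart; case: (d.2); first by left; rewrite -surjective_pairing.
by right; rewrite -surjective_pairing.
Qed.

Lemma conn_ends T d :
  connect (adj T) (tl d) (hd d) = connect (adj T) (ends d.1).1 (ends d.1).2.
Proof.
by case: (ends_dart d) => ->; rewrite //= conn_sym.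
Qed.

Variable p : V -> E * bool.
Definition fp v := if v == r then r else hd (p v).
Definition Tp := [set (p v).1 | v in [set v | v != r]].
Definition valid := forall v, v != r -> tl (p v) = v.
Definition acyc := forall v, fconnect fp v r.

Lemma fp_r : fp r = r.
Proof. by rewrite /fp eqxx. Qed.

Lemma fp_hd v : v != r -> fp v = hd (p v).
Proof. by rewrite /fp => /negPf ->. Qed.

Lemma closedS v : valid -> v != r -> forall x y,
  connect (adj (Tp :\ (p v).1)) x y -> fconnect fp x v -> fconnect fp y v.
Proof.
move=> vp nvr x y cxy; apply: (@CS _ _ ends _ [pred u | fconnect fp u v] _ x y cxy) => c.
rewrite !inE => /andP[ne /imsetP[u]]; rewrite inE => nur ec.
have nuv : u != v by apply: contraNneq ne => uv; rewrite ec uv.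
have [[h1 h2]|[h1 h2]] := dart_same ends ec; rewrite h1 h2 vp // -fp_hd //.
  by move=> H; apply: fcon_fwd.
exact: fcon_back.
Qed.

Lemma good_p v : valid -> v != r -> good Tp v (p v).
Proof.
move=> vp nvr; rewrite /dgood vp // eqxx /=.
have -> : (p v).1 \in Tp by apply/imsetP; exists v; rewrite ?inE.
apply/negP => /(closedS vp nvr) /(_ (connect0 _ _)) /(fcon_fix fp_r) rv.
by rewrite rv eqxx in nvr.
Qed.

Lemma acyc_tree : valid -> acyc -> spanning_tree ends Tp.
Proof.
move=> vp ac; have step v : connect (adj Tp) v (fp v).
  have [->|nvr] := eqVneq v r; first by rewrite fp_r connect0.
  rewrite fp_hd // -{1}(vp v nvr); apply/connect1/adj_dart.
  by apply/imsetP; exists v; rewrite ?inE.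
have toR v : connect (adj Tp) v r.
  rewrite -(iter_findex (ac v)); elim: (findex _ _ _) => [|n IH] /=.
    exact: connect0.
  exact: connect_trans IH (step _).
apply/andP; split.
  apply/forallP=> u; apply/forallP=> w.
  by apply: connect_trans (toR u) _; rewrite conn_sym toR.
apply/forall_inP=> e /imsetP[v]; rewrite inE => nvr ->.
rewrite -conn_ends; apply/negP => /(closedS vp nvr).
rewrite vp // => /(_ (connect0 _ _)).
by rewrite -fp_hd // (negPf (fcon_nocyc fp_r (ac v) nvr)).
Qed.

Lemma good_ex T v : spanning_tree ends T -> v != r -> exists d, good T v d.
Proof.
move=> st nvr; case: (boolP [exists d, good T v d]) => [/existsP //|/existsPn ng]; exfalso.
pose U := [pred u | (u == v) || [exists d, [&& d.1 \in T, tl d == v &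
                    connect (adj (T :\ d.1)) (hd d) u]]].
have : r \in U.
  apply: (@CS _ _ ends T U _ v r (st_conn st v r)); last by rewrite inE eqxx.
  move=> c cT; rewrite !inE => /orP[/eqP tc|/existsP[d /and3P[dT /eqP td cd]]].
    by apply/orP; right; apply/existsP; exists c; rewrite cT tc eqxx connect0.
  have [e1|e1] := eqVneq c.1 d.1.
    have [[h1 h2]|[h1 h2]] := dart_same ends e1; rewrite h2.
      by apply/orP; right; apply/existsP; exists d; rewrite dT td eqxx connect0.
    by rewrite td eqxx.
  apply/orP; right; apply/existsP; exists d; rewrite dT td eqxx /=.
  by apply: conn_step cd; rewrite !inE e1.
rewrite inE eq_sym (negPf nvr) /= => /existsP[d /and3P[dT /eqP td cd]].
move: (ng d); rewrite /dgood dT td eqxx /= negbK => cvr.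
have := st_bridge st dT; rewrite -conn_ends td.
by rewrite (connect_trans cvr) // conn_sym.
Qed.

Lemma tree_parent T : spanning_tree ends T -> (forall v, v != r -> good T v (p v)) ->
  [/\ valid, acyc & Tp = T].
Proof.
move=> st gp.
have vp : valid by move=> v /gp /and3P[_ /eqP -> _].
split => //.
  move=> u0; apply/negPn/negP => nu0.
  pose Z := [pred u | [exists x, (~~ fconnect fp x r) &&
                       connect (adj (T :\ (p x).1)) x u]].
  have nxr x : ~~ fconnect fp x r -> x != r.
    by apply: contraNneq => ->; apply: connect0.
  have : r \in Z.
    apply: (@CS _ _ ends T Z _ u0 r (st_conn st u0 r)); last first.
      by rewrite inE; apply/existsP; exists u0; rewrite nu0 connect0.
    move=> c cT; rewrite !inE => /existsP[x /andP[nx cx]].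
    have [e1|e1] := eqVneq c.1 (p x).1.
      have [[h1 h2]|[h1 h2]] := dart_same ends e1; rewrite h2.
        apply/existsP; exists (fp x); rewrite -fp_hd ?nxr // connect0 andbT.
        by apply: contra nx; apply: fcon_back.
      by apply/existsP; exists x; rewrite vp ?nxr // nx connect0.
    by apply/existsP; exists x; rewrite nx (conn_step _ cx) // !inE e1.
  rewrite inE => /existsP[x /andP[nx cx]].
  by case/and3P: (gp x (nxr x nx)) => _ _; rewrite cx.
apply/setP => e; apply/imsetP/idP => [[v]|eT].
  by rewrite inE => /gp /and3P[? _ _] ->.
pose a := (ends e).1; pose b := (ends e).2.
have br := st_bridge st eT.
have : r \in [predU connect (adj (T :\ e)) a & connect (adj (T :\ e)) b].
  apply: (@CS _ _ ends T _ _ a r (st_conn st a r)); last by rewrite !inE connect0.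
  move=> c cT; rewrite !inE => /orP[ca|cb].
    have [e1|e1] := eqVneq c.1 e; last by rewrite (conn_step _ ca) // !inE e1.
    have [tc|tc] := ends_dart c; rewrite e1 in tc.
      by rewrite -[hd c]/((tl c, hd c).2) -tc connect0 orbT.
      by rewrite -[hd c]/((hd c, tl c).1) -tc connect0.
  have [e1|e1] := eqVneq c.1 e; last by rewrite (conn_step _ cb) ?orbT // !inE e1.
  have [tc|tc] := ends_dart c; rewrite e1 in tc.
    by rewrite -[hd c]/((tl c, hd c).2) -tc connect0 orbT.
    by rewrite -[hd c]/((hd c, tl c).1) -tc connect0.
rewrite !inE => /orP[ar|br'].
  have nbr : ~~ connect (adj (T :\ e)) b r.
    by apply: contra br => cbr; rewrite (connect_trans ar) // conn_sym.
  have nb : b != r by apply: contraNneq nbr => ->; apply: connect0.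
  have g : good T b (e, false).
    by rewrite /dgood /dtl /dart /= eT eqxx nbr.
  by exists b; rewrite ?inE // (good_uniq (st_conn st) (gp b nb) g).
have nar : ~~ connect (adj (T :\ e)) a r.
  by apply: contra br => car; rewrite (connect_trans car) // conn_sym.
have na : a != r by apply: contraNneq nar => ->; apply: connect0.
have g : good T a (e, true).
  by rewrite /dgood /dtl /dart /= eT eqxx nar.
by exists a; rewrite ?inE // (good_uniq (st_conn st) (gp a na) g).
Qed.

End Tree.

Local Open Scope ring_scope.

Lemma det_sum_rows (R : comNzRingType) n (D : finType) (G : 'I_n -> D -> 'I_n -> R) :
  \det (\matrix_(i, j) \sum_(d : D) G i d j) =
  \sum_(phi : {ffun 'I_n -> D}) \det (\matrix_(i, j) G i (phi i) j).
Proof.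
rewrite /determinant.
transitivity (\sum_(s : 'S_n) \sum_(phi : {ffun 'I_n -> D})
                 (-1) ^+ s * \prod_i G i (phi i) (s i)).
  apply: eq_bigr => s _; rewrite -mulr_sumr; congr (_ * _).
  rewrite -(bigA_distr_bigA (fun i d => G i d (s i))); apply: eq_bigr => i _; by rewrite mxE.
rewrite exchange_big; apply: eq_bigr => phi _; apply: eq_bigr => s _.
by congr (_ * _); apply: eq_bigr => i _; rewrite mxE.
Qed.

Lemma det_scale_rows (R : comNzRingType) n (c : 'I_n -> R) (B : 'M[R]_n) :
  \det (\matrix_(i, j) (c i * B i j)) = (\prod_i c i) * \det B.
Proof.
have -> : \matrix_(i, j) (c i * B i j) = diag_mx (\row_i c i) *m B.
  by apply/matrixP => i j; rewrite mul_diag_mx !mxE.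
by rewrite det_mulmx det_diag; congr (_ * _); apply: eq_bigr => i _; rewrite mxE.
Qed.

Lemma sum_delta (R : comNzRingType) n (c : 'I_n) (F : 'I_n -> R) :
  \sum_k (k == c)%:R * F k = F c.
Proof.
rewrite (bigD1 c) //= eqxx mul1r big1 ?addr0 // => k /negPf ->; exact: mul0r.
Qed.

Lemma det_rank1 (R : comNzRingType) n (i0 : 'I_n) (c : R) :
  \det (\matrix_(i, j) ((i == j)%:R - c * (i == i0)%:R)) = 1 - c.
Proof.
rewrite (expand_det_col _ i0) (bigD1 i0) //= big1 ?addr0; last first.
  by move=> k /negPf nk; rewrite !mxE nk !mulr0 subr0 mul0r.
rewrite !mxE eqxx mulr1 /cofactor addnn -signr_odd odd_double expr0 mul1r.
have -> : row' i0 (col' i0 (\matrix_(i, j) ((i == j)%:R - c * (i == i0)%:R)))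
          = 1%:M.
  apply/matrixP => a b; rewrite !mxE (inj_eq (lift_inj (h:=i0))).
  by rewrite [lift i0 a == i0]eq_sym (negPf (neq_lift _ _)) mulr0 subr0.
by rewrite det1 mulr1.
Qed.

Lemma det_scale_rows' (R : comNzRingType) n (c : 'I_n -> R) (b : 'I_n -> 'I_n -> R) :
  \det (\matrix_(i, j) (c i * b i j)) = (\prod_i c i) * \det (\matrix_(i, j) b i j).
Proof.
rewrite -det_scale_rows; congr (\det _); apply/matrixP => i j; by rewrite !mxE.
Qed.

Local Close Scope ring_scope.

Local Open Scope ring_scope.

Section Ev.
Variables (V : finType) (r : V).
Local Notation W := (qvert r).
Local Notation m := #|{: W}|.
Definition evq (i : 'I_m) : W := enum_val i.
Local Notation ev := evq.

Lemma ev_neq i : val (ev i) != r.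
Proof. by case: (ev i). Qed.

Lemma ev_inj : injective (fun i => val (ev i)).
Proof. by move=> i j /val_inj /(congr1 enum_rank); rewrite /evq !enum_valK. Qed.

Lemma ev_rank (q : W) : ev (enum_rank q) = q.
Proof. by rewrite /evq enum_rankK. Qed.

Lemma sum_ev (R : comNzRingType) (u : V) (c : V -> R) :
  \sum_j (u == val (ev j))%:R * c (val (ev j)) = (u != r)%:R * c u.
Proof.
have [->|nur] := eqVneq u r.
  by rewrite mul0r big1 // => j _; rewrite eq_sym (negPf (ev_neq j)) mul0r.
rewrite (bigD1 (enum_rank (Sub u nur : W))) //= ev_rank eqxx !mul1r big1 ?addr0 //.
move=> j nj; case: eqP => [uj|]; last by rewrite mul0r.
by case/eqP: nj; apply: ev_inj; rewrite ev_rank /= uj.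
Qed.

Lemma iter_perm_inj n (s : 'S_n) k : injective (iter k s).
Proof. elim: k => [|k IH] //= a b /perm_inj; exact: IH. Qed.

Lemma det_func (R : fieldType) (g : V -> V) : g r = r ->
  \det (\matrix_(i, j) ((i == j)%:R - (g (val (ev i)) == val (ev j))%:R) : 'M[R]_m)
  = ([forall v, fconnect g v r] : bool)%:R.
Proof.
move=> gr; case: (boolP [forall v, _]) => [/forallP ac|/forallPn [u0 nu0]].
  rewrite /determinant (bigD1 1%g) //= [X in _ + X]big1 ?addr0.
    rewrite odd_perm1 expr0 mul1r big1 // => i _; rewrite mxE perm1 eqxx.
    case: eqP => [gi|]; last by rewrite subr0.
    have := iter_findex (ac (val (ev i))); rewrite iter_fix; last exact: gi.
    by move=> e; case/eqP: (ev_neq i).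
  move=> s ns; apply/eqP; rewrite mulf_eq0; apply/orP; right; apply/prodf_eq0.
  set M := \matrix_(_, _) _.
  suff /existsP[i hi] : [exists i, M i (s i) == 0] by exists i.
  apply: contraT => /existsPn H.
  have [i1 si1] : exists i, s i != i.
    suff /existsP[i hi] : [exists i, s i != i] by exists i.
    apply: contraT => /existsPn H2; case/eqP: ns; apply/permP => i.
    by rewrite perm1; apply/eqP; move/negPn: (H2 i).
  have step i : s i != i -> g (val (ev i)) = val (ev (s i)).
    move=> nsi; move: (H i); rewrite /M mxE [i == _]eq_sym (negPf nsi) sub0r oppr_eq0.
    by move=> h; apply/eqP; move: h; case: (g _ == _) => //=; rewrite eqxx.
  have inv k : (s (iter k s i1) != iter k s i1) /\
               val (ev (iter k s i1)) = iter k g (val (ev i1)).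
    elim: k => [|k [nk ek]] //=; split; last by rewrite -ek step.
    by apply: contra nk => /eqP e; apply/eqP; exact: perm_inj e.
  have := ac (val (ev i1)); move/iter_findex; rewrite -(inv _).2 => e.
  by move: (ev_neq (iter (findex g (val (ev i1)) r) s i1)); rewrite e eqxx.
have nu0r : u0 != r by apply: contra nu0 => /eqP ->; apply: connect0.
apply/eqP; rewrite -det_tr; apply/det0P.
exists (\row_i (~~ fconnect g (val (ev i)) r)%:R).
  apply/eqP => /rowP /(_ (enum_rank (Sub u0 nu0r : W))); rewrite !mxE ev_rank /=.
  by rewrite nu0 => /eqP; rewrite oner_eq0.
apply/rowP => j; rewrite !mxE.
under eq_bigr => i _ do rewrite !mxE mulrBr.
rewrite sumrB.
under eq_bigr => i _ do rewrite mulrC.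
rewrite [X in X - _](eq_bigr (fun i => (i == j)%:R * (~~ fconnect g (val (ev i)) r)%:R)); last by move=> i _; rewrite eq_sym.
rewrite sum_delta.
under eq_bigr => i _ do rewrite mulrC.
rewrite (sum_ev _ (fun v => (~~ fconnect g v r)%:R)) /=.
have [gj|ngj] := eqVneq (g (val (ev j))) r.
  rewrite /= mul0r subr0.
  by rewrite (fcon_back (v := r) (u := val (ev j))) // gj connect0.
rewrite /= mul1r.
suff -> : fconnect g (val (ev j)) r = fconnect g (g (val (ev j))) r by rewrite subrr.
apply/idP/idP; [move=> h; exact: fcon_fwd h (ev_neq j)|exact: fcon_back].
Qed.
End Ev.

Local Close Scope ring_scope.

Section Count.
Variables (V E : finType) (ends : E -> V * V) (v1 v2 : V) (hv : v1 != v2).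
Local Notation W := (qvert v2).
Local Notation m := #|{: W}|.
Local Notation ev := (@evq V v2).

Definition q0 : W := exist _ v1 hv.
Definition kk (u : V) : 'I_m := enum_rank (insubd q0 u).

Lemma kk_ev i : kk (val (ev i)) = i.
Proof. by rewrite /kk valKd enum_valK. Qed.

Lemma ev_kk u : u != v2 -> val (ev (kk u)) = u.
Proof. by move=> nu; rewrite /kk ev_rank val_insubd nu. Qed.

Definition pphi (phi : {ffun 'I_m -> E * bool}) v := phi (kk v).

Definition Pset := [set phi : {ffun 'I_m -> E * bool} |
  [forall i, dtl ends (phi i) == val (ev i)] &&
  [forall v, fconnect (fp ends v2 (pphi phi)) v v2]].

Lemma valid_pphi (phi : {ffun 'I_m -> E * bool}) : [forall i, dtl ends (phi i) == val (ev i)] ->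
  valid ends v2 (pphi phi).
Proof. by move=> /forallP H v nv; rewrite /pphi (eqP (H _)) ev_kk. Qed.

Lemma card_Pset : #|Pset| = tau ends.
Proof.
rewrite /tau -(@card_in_imset _ _ (fun phi => Tp v2 (pphi phi))).
  apply: eq_card => T; rewrite inE; apply/imsetP/idP.
    move=> [phi]; rewrite inE => /andP[/valid_pphi vp /forallP ac] ->.
    exact: acyc_tree vp ac.
  move=> st.
  have ex (i : 'I_m) := good_ex st (@ev_neq V v2 i).
  pose phi := [ffun i => xchoose (ex i)].
  have gp : forall v, v != v2 -> dgood ends v2 T v (pphi phi v).
    by move=> v nv; rewrite /pphi ffunE -{1}(ev_kk nv); apply: xchooseP.
  have [vp ac eT] := tree_parent st gp.
  exists phi => //; rewrite inE; apply/andP; split.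
    apply/forallP => i; move: (gp _ (ev_neq i)); rewrite /pphi kk_ev.
    by case/and3P.
  by apply/forallP.
move=> phi psi; rewrite !inE => /andP[/valid_pphi vp /forallP ac].
move=> /andP[/valid_pphi vq /forallP aq] e.
have st := acyc_tree vp ac.
apply/ffunP => i; have ni := ev_neq i.
have g1 := good_p vp ni; have g2 := good_p vq ni; rewrite -e in g2.
by move: (good_uniq (st_conn st) g1 g2); rewrite /pphi kk_ev.
Qed.
End Count.

Local Open Scope ring_scope.

Section Main.
Variables (V E : finType) (ends : E -> V * V) (v1 v2 : V) (hv : v1 != v2).
Local Notation W := (qvert v2).
Local Notation m := #|{: W}|.
Local Notation ev := (@evq V v2).
Local Notation kk := (kk hv).
Local Notation tl := (dtl ends).
Local Notation hd := (dhd ends).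

Lemma eq_ev_kk u i : u != v2 -> (u == val (ev i)) = (i == kk u).
Proof.
move=> nu; apply/eqP/eqP => [->|->]; first by rewrite kk_ev.
by rewrite ev_kk.
Qed.

Lemma zsum (R : comNzRingType) u (F : 'I_m -> R) :
  \sum_k (u == val (ev k))%:R * F k = (u != v2)%:R * F (kk u).
Proof.
rewrite -(@sum_ev V v2 R u (fun v => F (kk v))).
by apply: eq_bigr => k _; rewrite kk_ev.
Qed.

Definition Amx (R : fieldType) : 'M[R]_m :=
  \matrix_(i, j) \sum_(d : E * bool)
     ((tl d == val (ev i))%:R * ((i == j)%:R - (hd d == val (ev j))%:R)).

Lemma prod_nat_bool (R : comNzRingType) (b : 'I_m -> bool) :
  \prod_i ((b i)%:R : R) = ([forall i, b i] : bool)%:R.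
Proof.
case: (boolP [forall i, b i]) => [/forallP H|/forallPn [i nb]].
  by rewrite big1 // => i _; rewrite H.
by rewrite (bigD1 i) //= (negPf nb) mul0r.
Qed.

Lemma det_Amx (R : fieldType) : \det (Amx R) = (#|Pset ends hv|)%:R.
Proof.
rewrite /Amx det_sum_rows.
transitivity (\sum_(phi : {ffun 'I_m -> E * bool})
                ((phi \in Pset ends hv) : bool)%:R : R).
  apply: eq_bigr => phi _.
  set M := \matrix_(i, j) _.
  have -> : M = \matrix_(i, j) ((tl (phi i) == val (ev i))%:R *
                 ((i == j)%:R - (hd (phi i) == val (ev j))%:R)).
    by apply/matrixP => i j; rewrite !mxE.
  rewrite det_scale_rows' prod_nat_bool inE.
  case: (boolP [forall i, _]) => [H|]; last by rewrite !mul0r.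
  rewrite mul1r /=.
  have -> : \matrix_(i, j) ((i == j)%:R - (hd (phi i) == val (ev j))%:R)
           = \matrix_(i, j) ((i == j)%:R -
              (fp ends v2 (pphi hv phi) (val (ev i)) == val (ev j))%:R) :> 'M[R]_m.
    apply/matrixP => i j; rewrite !mxE fp_hd ?ev_neq //.
    by rewrite /pphi kk_ev.
  by rewrite det_func // fp_r.
rewrite (eq_bigr (fun phi => if phi \in Pset ends hv then 1 else 0)); last first.
  by move=> phi _; case: (_ \in _).
by rewrite -big_mkcond /= sumr_const.
Qed.

End Main.

Local Close Scope ring_scope.

Local Open Scope ring_scope.

Section Main2.
Variables (V E : finType) (ends : E -> V * V) (v1 v2 : V) (hv : v1 != v2).
Local Notation W := (qvert v2).
Local Notation m := #|{: W}|.
Local Notation ev := (@evq V v2).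
Local Notation kk := (kk hv).
Local Notation tl := (dtl ends).
Local Notation hd := (dhd ends).

Lemma xF_neq0 : xF != 0.
Proof. by rewrite /xF tofrac_eq0 polyX_eq0. Qed.

Definition i0 := kk v1.
Definition Lmx : 'M[Fx]_m := \matrix_(i, j) ((i == j)%:R - xF * (i == i0)%:R).
Definition Rmx : 'M[Fx]_m := \matrix_(i, j) ((i == j)%:R - xF^-1 * (j == i0)%:R).

Lemma det_Lmx : \det Lmx = 1 - xF.
Proof. exact: det_rank1. Qed.

Lemma det_Rmx : \det Rmx = 1 - xF^-1.
Proof.
rewrite -det_tr -(det_rank1 i0); congr (\det _); apply/matrixP => i j.
by rewrite !mxE eq_sym.
Qed.

Definition al t i := (t != v2)%:R * Lmx i (kk t).
Definition be u j := (u != v2)%:R * Rmx (kk u) j.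

Lemma sum_pair (R : nmodType) (f : E * bool -> R) :
  \sum_(d : E * bool) f d = \sum_e \sum_b f (e, b).
Proof. by rewrite pair_bigA; apply: eq_bigr => -[e b]. Qed.

Lemma LAR_entry i j : (Lmx *m Amx ends v2 Fx *m Rmx) i j =
  \sum_(d : E * bool) al (tl d) i * (be (tl d) j - be (hd d) j).
Proof.
have LA l : (Lmx *m Amx ends v2 Fx) i l = \sum_(d : E * bool)
    al (tl d) i * ((kk (tl d) == l)%:R - (hd d == val (ev l))%:R).
  rewrite mxE; under eq_bigr => k _ do rewrite /Amx [X in _ * X]mxE mulr_sumr.
  rewrite exchange_big; apply: eq_bigr => d _.
  under eq_bigr => k _ do rewrite mulrCA.
  by rewrite (zsum hv) /al mulrA.
rewrite mxE; under eq_bigr => l _ do rewrite LA mulr_suml.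
rewrite exchange_big; apply: eq_bigr => d _.
under eq_bigr => l _ do rewrite -mulrA mulrBl.
rewrite -mulr_sumr sumrB.
under eq_bigr => l _ do rewrite eq_sym.
rewrite sum_delta (zsum hv) /be.
rewrite /al; by case: (tl d != v2); rewrite /= ?mul1r ?mul0r.
Qed.

Definition s u (i : 'I_m) : Fx := ((join_vtx v1 v2 0 u).1 == val (ev i))%:R.
Definition w u : Fx := if u == v2 then xF^-1 else 1.

Lemma s_v2 i : s v2 i = (i == i0)%:R.
Proof. by rewrite /s /join_vtx eqxx (_ : (v1, 0 - 1).1 = v1) // (eq_ev_kk hv _ hv). Qed.

Lemma s_nv2 u i : u != v2 -> s u i = (i == kk u)%:R.
Proof. by move=> nu; rewrite /s /join_vtx (negPf nu) (_ : (u, 0).1 = u) // (eq_ev_kk hv _ nu). Qed.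

Lemma al_E t i : al t i = (w t)^-1 * s t i - xF * (i == i0)%:R.
Proof.
rewrite /al /w; case: eqVneq => [->|nt].
  by rewrite mul0r s_v2 invrK subrr.
by rewrite mul1r invr1 mul1r s_nv2 // /Lmx mxE.
Qed.

Lemma be_E u j : be u j = w u * s u j - xF^-1 * (j == i0)%:R.
Proof.
rewrite /be /w; case: eqVneq => [->|nt].
  by rewrite mul0r s_v2 subrr.
by rewrite !mul1r s_nv2 // /Rmx mxE eq_sym.
Qed.

Lemma w_neq0 u : w u != 0.
Proof. by rewrite /w; case: (u == v2); [rewrite invr_eq0 xF_neq0|exact: oner_neq0]. Qed.

Lemma jv_pow t h :
  xF ^ ((join_vtx v1 v2 0 h).2 - (join_vtx v1 v2 0 t).2) = w h / w t.
Proof.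
have x0 := xF_neq0.
rewrite /join_vtx /w; case: (h == v2); case: (t == v2) => /=.
- have x0' : xF^-1 != 0 by rewrite invr_eq0.
  by rewrite (_ : (0 - 1) - (0 - 1) = 0 :> int) // expr0z (divff x0').
- by rewrite (_ : (0 - 1) - 0 = -1 :> int) // exprN1 divr1.
- by rewrite (_ : 0 - (0 - 1) = 1 :> int) // expr1z div1r invrK.
- by rewrite (_ : 0 - 0 = 0 :> int) // expr0z divr1.
Qed.

Lemma ss u i j : (i == j)%:R * s u i = s u i * s u j.
Proof.
rewrite /s; case: (eqVneq i j) => [->|nij].
  by case: (_ == _); rewrite /= ?mul1r ?mul0r.
rewrite mul0r; case: eqP => [pi|]; last by rewrite mul0r.
case: eqP => [pj|]; last by rewrite mulr0.
by case/eqP: nij; apply: ev_inj; rewrite -pi -pj.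
Qed.

Lemma lapL_entry i j : lapL ends v1 v2 i j =
  \sum_(d : E * bool) ((i == j)%:R * s (tl d) i -
                        s (tl d) i * s (hd d) j * (w (hd d) / w (tl d))).
Proof.
rewrite /lapL mxE /lapD /lapA sum_pair.
have -> : forall X : nat, (if i == j then X%:R else 0) = (i == j)%:R * X%:R :> Fx.
  by move=> X; case: (i == j); rewrite ?mul1r ?mul0r.
rewrite natr_sum mulr_sumr -sumrB; apply: eq_bigr => e _.
rewrite natr_sum mulr_sumr -sumrB; apply: eq_bigr => b _.
rewrite /= jv_pow /s /dtl /dhd /=.
rewrite /evq; case: ((join_vtx v1 v2 0 (dart ends e b).1).1 == _); case: ((join_vtx v1 v2 0 (dart ends e b).2).1 == _); by rewrite /= ?mul1r ?mul0r ?mulr0 ?mul1r.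
Qed.

End Main2.

Local Close Scope ring_scope.

Local Open Scope ring_scope.

Lemma tl_t (V E : finType) (ends : E -> V * V) e : dtl ends (e, true) = (ends e).1.
Proof. by []. Qed.
Lemma hd_t (V E : finType) (ends : E -> V * V) e : dhd ends (e, true) = (ends e).2.
Proof. by []. Qed.
Lemma tl_f (V E : finType) (ends : E -> V * V) e : dtl ends (e, false) = (ends e).2.
Proof. by []. Qed.
Lemma hd_f (V E : finType) (ends : E -> V * V) e : dhd ends (e, false) = (ends e).1.
Proof. by []. Qed.

Lemma sum_bool (R : nmodType) (f : bool -> R) : \sum_b f b = f true + f false.
Proof. by rewrite big_bool. Qed.

Lemma key_id (F : fieldType) (sai saj sbi sbj x ei ej wa wb : F) :
  wa != 0 -> wb != 0 -> x != 0 ->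
  sai * saj - sai * sbj * (wb / wa) + (sbi * sbj - sbi * saj * (wa / wb)) =
  (wa^-1 * sai - x * ei) * (wa * saj - x^-1 * ej - (wb * sbj - x^-1 * ej)) +
  (wb^-1 * sbi - x * ei) * (wb * sbj - x^-1 * ej - (wa * saj - x^-1 * ej)).
Proof. by move=> ha hb hx; field; rewrite hx ha hb. Qed.

Lemma lapL_eq (V E : finType) (ends : E -> V * V) (v1 v2 : V) (hv : v1 != v2) :
  lapL ends v1 v2 = Lmx hv *m Amx ends v2 Fx *m Rmx hv.
Proof.
apply/matrixP => i j; rewrite lapL_entry LAR_entry !sum_pair.
apply: eq_bigr => e _; rewrite !sum_bool tl_t hd_t tl_f hd_f.
rewrite !al_E !be_E !ss.
have := w_neq0 v2 (ends e).1; have := w_neq0 v2 (ends e).2.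
move=> hb ha; exact: key_id ha hb xF_neq0.
Qed.

Lemma final_id (F : fieldType) (t x : F) : x != 0 ->
  (1 - x) * t * (1 - x^-1) = -1 * x^-1 * t * (x - 1) ^+ 2.
Proof. by move=> hx; field. Qed.

Theorem mainTheorem6 (V E : finType) (ends : E -> V * V) (v1 v2 : V)
    (hv : v1 != v2) :
  exists (c : rat) (k : int), c != 0 /\
    Delta0 ends v1 v2 =
      tofrac (c%:P : {poly rat}) * xF ^ k * (tau ends)%:R * (xF - 1) ^+ 2.
Proof.
exists (-1), (-1); split; first by rewrite oppr_eq0 oner_eq0.
rewrite /Delta0 (lapL_eq ends hv) !det_mulmx det_Lmx (det_Amx ends hv Fx) det_Rmx card_Pset.
rewrite exprN1 polyCN polyC1 rmorphN1.
move: (tau ends)%:R xF xF_neq0 => t x hx.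
exact: final_id.
Qed.

Local Close Scope ring_scope.
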